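(* Let $M=\frac32-\sqrt2$. For real $f_1,f_2,f_3,y_1,y_2,y_3$ put $$\hat A=(1-f_1)(1-y_1)+(1-f_2)(1-y_2)+2(1-f_3)(1-y_3),\qquad \hat F_1=\frac{(1-f_1)(1-y_1)}{\hat A},$$ $$P_1=\frac{y_1(\frac12-y_1)}{1-y_1}-\frac{4Mf_2}{1-f_1},\quad P_2=(1-f_2)\,y_2(\tfrac12-y_2)+4Mf_1(1-y_2),\quad P_3=2(1-f_3)\,y_3(\tfrac12-y_3)+8M(f_1+f_2)(1-y_3),$$ and $$\hat\alpha(f_1,f_2,f_3,y_1,y_2,y_3)=\frac{1}{(\frac12-\hat F_1)\hat A}\Bigl(\hat A(1-\hat F_1)P_1+P_2+P_3\Bigr).$$ Then for all $f_1,f_2,f_3,y_1,y_2,y_3\in[0,\frac12]$ satisfying $f_1+f_2+2f_3=1$, $6f_1+f_2-1<0$, $4f_1+f_2-\frac34<0$, $\frac1{13}\le f_1\le\frac12$ and $0\le f_2,f_3\le\frac12$, we have $\hat\alpha(f_1,f_2,f_3,y_1,y_2,y_3)\le\frac{9163}{10000}$.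
   Context: In the paper's notation, with $\Phi(x)=\frac{1}{x(\frac12-x)}$, one has $y(\frac12-y)=1/\Phi(y)$ and $\frac{1}{(\frac12-\hat F_1)\hat A}=\frac{\Phi(\hat F_1)\hat F_1}{\hat A}$. Under the hypotheses $0<\hat F_1<\frac12$. *)

(* Defs.v *)
From Stdlib Require Import Reals Lra.
Open Scope R_scope.

Definition M : R := 3/2 - sqrt 2.

Definition Ahat (f1 f2 f3 y1 y2 y3 : R) : R :=
  (1 - f1) * (1 - y1) + (1 - f2) * (1 - y2) + 2 * (1 - f3) * (1 - y3).

Definition F1hat (f1 f2 f3 y1 y2 y3 : R) : R :=
  (1 - f1) * (1 - y1) / Ahat f1 f2 f3 y1 y2 y3.

Definition P1 (f1 f2 y1 : R) : R :=
  y1 * (1/2 - y1) / (1 - y1) - 4 * M * f2 / (1 - f1).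

Definition P2 (f1 f2 y2 : R) : R :=
  (1 - f2) * y2 * (1/2 - y2) + 4 * M * f1 * (1 - y2).

Definition P3 (f1 f2 f3 y3 : R) : R :=
  2 * (1 - f3) * y3 * (1/2 - y3) + 8 * M * (f1 + f2) * (1 - y3).

Definition alphahat (f1 f2 f3 y1 y2 y3 : R) : R :=
  let A := Ahat f1 f2 f3 y1 y2 y3 in
  let F := F1hat f1 f2 f3 y1 y2 y3 in
  / ((1/2 - F) * A) * (A * (1 - F) * P1 f1 f2 y1 + P2 f1 f2 y2 + P3 f1 f2 f3 y3).

(* Main.v *)
Require Import Defs.
From Stdlib Require Import Reals Lra Psatz.
Open Scope R_scope.

Definition Kc : R := 9163/10000.
Definition Mu : R := 857865/10000000.

Lemma div_le (a b c : R) : 0 < c -> a <= b * c -> a / c <= b.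
Proof.
  intros Hc H. apply Rmult_le_reg_r with c; auto.
  unfold Rdiv. rewrite Rmult_assoc, Rinv_l; lra.
Qed.

Lemma div_nonneg (a c : R) : 0 <= a -> 0 < c -> 0 <= a / c.
Proof.
  intros. unfold Rdiv. apply Rmult_le_pos; auto. left; apply Rinv_0_lt_compat; auto.
Qed.

Lemma endA (t : R) : 1/2 <= t <= 1 ->
  let K := 9163/10000 in let Mu := 857865/10000000 in let a := 1/6 in
  let ts := (3 - K/2)*t - t*t - 1/2 in
  (2+a)/4*(ts*ts-2*t*t) + 6*Mu*a*t*ts + (4*Mu*Mu*a*a + 16*Mu*Mu*a*a/(1+a))*t*t + K*(1-a)/2*t*t*t <= 0.
Proof. intros Ht K Mu a ts. unfold ts, K, Mu, a.
 assert (H1 : 0 <= (t-843/1000)^2) by apply pow2_ge_0.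
 assert (H2 : 0 <= (t-843/1000)^2 * (t-1/2)) by (apply Rmult_le_pos; [apply pow2_ge_0|lra]).
 assert (H3 : 0 <= (t-843/1000)^2 * (1-t)) by (apply Rmult_le_pos; [apply pow2_ge_0|lra]).
 assert (H4 : 0 <= (t-843/1000)^2 * ((1-t)*(t-1/2))) by (apply Rmult_le_pos; [apply pow2_ge_0|nra]).
 lra.
Qed.

Lemma endB (t : R) : 1/2 <= t <= 1 ->
  let K := 9163/10000 in let Mu := 857865/10000000 in let a := 1/13 in
  let ts := (3 - K/2)*t - t*t - 1/2 in
  (2+a)/4*(ts*ts-2*t*t) + 6*Mu*a*t*ts + (4*Mu*Mu*a*a + 16*Mu*Mu*a*a/(1+a))*t*t + K*(1-a)/2*t*t*t <= 0.
Proof. intros Ht K Mu a ts. unfold ts, K, Mu, a.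
 assert (H1 : 0 <= (t-8825/10000)^2) by apply pow2_ge_0.
 assert (H2 : 0 <= (t-8825/10000)^2 * (t-1/2)) by (apply Rmult_le_pos; [apply pow2_ge_0|lra]).
 assert (H3 : 0 <= (t-8825/10000)^2 * (1-t)) by (apply Rmult_le_pos; [apply pow2_ge_0|lra]).
 assert (H4 : 0 <= (t-8825/10000)^2 * ((1-t)*(t-1/2))) by (apply Rmult_le_pos; [apply pow2_ge_0|nra]).
 lra.
Qed.

Definition Gs (a s t : R) : R :=
  (2+a)*(s*s-2)/4 + 6*Mu*a*s + 4*Mu*Mu*a*a + 16*Mu*Mu*a*a/(1+a) + Kc*(1-a)*t/2.
Definition Gu (a t : R) : R := Gs a (3 - Kc/2 - t - 1/(2*t)) t.

Lemma Gu_end (a t : R) : (a = 1/6 \/ a = 1/13) -> 1/2 <= t <= 1 -> Gu a t <= 0.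
Proof.
  intros Ha Ht.
  assert (Hpos : 0 < t*t) by nra.
  set (ts := (3 - Kc/2)*t - t*t - 1/2).
  assert (E : Gu a t = ((2+a)/4*(ts*ts-2*t*t) + 6*Mu*a*t*ts
     + (4*Mu*Mu*a*a + 16*Mu*Mu*a*a/(1+a))*t*t + Kc*(1-a)/2*t*t*t) / (t*t)).
  { unfold Gu, Gs, ts. field. destruct Ha; subst; lra. }
  rewrite E. apply div_le; auto. rewrite Rmult_0_l.
  destruct Ha as [-> | ->].
  - pose proof (endA t Ht) as H. unfold ts, Kc, Mu. exact H.
  - pose proof (endB t Ht) as H. unfold ts, Kc, Mu. exact H.
Qed.

Lemma Gu_all (f t : R) : 1/13 <= f <= 1/6 -> 1/2 <= t <= 1 -> Gu f t <= 0.
Proof.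
  intros Hf Ht.
  pose proof (Gu_end (1/6) t (or_introl eq_refl) Ht) as HA.
  pose proof (Gu_end (1/13) t (or_intror eq_refl) Ht) as HB.
  assert (E : Gu f t - ((1/6 - f) * Gu (1/13) t + (f - 1/13) * Gu (1/6) t)/(1/6 - 1/13)
     = (f - 1/13)*(f - 1/6)*(4*Mu*Mu + 16*Mu*Mu/((1+1/13)*(1+1/6)*(1+f)))).
  { unfold Gu, Gs. field. lra. }
  assert (H1 : 0 <= 16*Mu*Mu/((1+1/13)*(1+1/6)*(1+f))).
  { apply div_nonneg. unfold Mu; lra. nra. }
  assert (H2 : (f - 1/13)*(f - 1/6) <= 0) by nra.
  assert (H3 : 0 <= 4*Mu*Mu) by (unfold Mu; lra).
  assert (H4 : (f - 1/13)*(f - 1/6)*(4*Mu*Mu + 16*Mu*Mu/((1+1/13)*(1+1/6)*(1+f))) <= 0).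
  { assert (0 <= 4*Mu*Mu + 16*Mu*Mu/((1+1/13)*(1+1/6)*(1+f))) by lra. nra. }
  assert (H5 : ((1/6 - f) * Gu (1/13) t + (f - 1/13) * Gu (1/6) t)/(1/6 - 1/13) <= 0).
  { apply div_le. lra. rewrite Rmult_0_l. nra. }
  lra.
Qed.

Definition G2 (M f1 f2 h y1 : R) : R :=
  let s := 3/2 - Kc/2 - 4*M*f2 + h in
  (2+f1)*(s*s-2)/4 + 2*M*(3*f1+2*f2)*s + 4*M*M*f1*f1/(1-f2)
  + 16*M*M*(f1+f2)*(f1+f2)/(1+f1+f2) + Kc*(1-f1)*(1-y1)/2.

Lemma poly_aux (f1 f2 : R) : 1/13 <= f1 <= 1/6 -> 0 <= f2 <= 1/2 -> f2 <= 1 - 6*f1 ->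
  16*((1+f1)*(1+f1+f2) - 1) <= (39*f1 - 8*f1*f1 - (4*f1-8)*f2) * ((1+f1)*(1+f1+f2)).
Proof. intros H1 H2 H3.
  assert (0 <= (f2-31/100)^2) by apply pow2_ge_0.
  assert (0 <= (f1-1/13)*f2) by nra.
  assert (0 <= (f1-1/13)*f2*f2) by nra.
  assert (0 <= (f1-1/13)*f1*f2) by nra.
  assert (0 <= (f1-1/13)*f1) by nra.
  assert (0 <= (f1-1/13)*f1*f1) by nra.
  assert (0 <= (1/6-f1)*f1*f1*f1) by nra.
  assert (0 <= (1/6-f1)*f1*f1*f2) by nra.
  assert (0 <= (1/2-f2)*f1*f1*f2) by nra.
  lra.
Qed.

Lemma Xb (f1 f2 : R) : 1/13 <= f1 <= 1/6 -> 0 <= f2 <= 1/2 -> f2 <= 1 - 6*f1 ->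
  (4*f1-8)*f2 - 24*f1 + 4*f1*f1/(1-f2) + 16 - 16/((1+f1)*(1+f1+f2)) <= 15*f1.
Proof. intros H1 H2 H3.
  assert (Hp : 0 < 1-f2) by lra. assert (Hq : 0 < (1+f1)*(1+f1+f2)) by nra.
  assert (E1: 4*f1*f1/(1-f2) <= 8*f1*f1).
  { apply div_le; auto. nra. }
  assert (E2: 16 - 16/((1+f1)*(1+f1+f2)) = 16*((1+f1)*(1+f1+f2) - 1)/((1+f1)*(1+f1+f2))) by (field; lra).
  assert (E3: 16*((1+f1)*(1+f1+f2) - 1)/((1+f1)*(1+f1+f2)) <= 39*f1 - 8*f1*f1 - (4*f1-8)*f2).
  { apply div_le; auto. apply poly_aux; auto. }
  lra.
Qed.

Lemma G2_f2 (M f1 f2 h y1 : R) : 857864/10000000 <= M <= 857865/10000000 ->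
  1/13 <= f1 <= 1/6 -> 0 <= f2 <= 1/2 -> f2 <= 1 - 6*f1 -> 0 <= h ->
  G2 M f1 f2 h y1 <= G2 M f1 0 h y1.
Proof.
  intros HM H1 H2 H3 Hh.
  set (s0 := 3/2 - Kc/2 + h).
  set (X := (4*f1-8)*f2 - 24*f1 + 4*f1*f1/(1-f2) + 16 - 16/((1+f1)*(1+f1+f2))).
  assert (E : G2 M f1 f2 h y1 - G2 M f1 0 h y1 = M*f2*(-2*f1*s0 + M*X)).
  { unfold G2, s0, X. field. split; [lra|]. split; [lra|]. nra. }
  pose proof (Xb f1 f2 H1 H2 H3) as HX. fold X in HX.
  assert (Hs0 : 1 <= s0) by (unfold s0, Kc; lra).
  assert (A1 : 0 <= M*(15*f1 - X)) by (apply Rmult_le_pos; lra).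
  assert (A2 : 0 <= (857865/10000000 - M)*f1) by (apply Rmult_le_pos; lra).
  assert (A3 : -2*f1*s0 + M*X <= 0) by nra.
  assert (A4 : 0 <= M*f2) by (apply Rmult_le_pos; lra).
  assert (M*f2*(-2*f1*s0 + M*X) <= 0) by nra.
  lra.
Qed.

Lemma G2_M (M f1 y1 : R) : 857864/10000000 <= M <= 857865/10000000 ->
  1/13 <= f1 <= 1/6 -> 0 <= y1 <= 1/2 ->
  G2 M f1 0 (y1*(1/2-y1)/(1-y1)) y1 <= Gu f1 (1-y1).
Proof.
  intros HM H1 Hy.
  set (h := y1*(1/2-y1)/(1-y1)).
  assert (Hh : 0 <= h) by (apply div_nonneg; nra).
  assert (Es : 3 - Kc/2 - (1-y1) - 1/(2*(1-y1)) = 3/2 - Kc/2 - 4*M*0 + h).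
  { unfold h. field. lra. }
  unfold Gu. rewrite Es. unfold G2, Gs.
  set (s := 3/2 - Kc/2 - 4*M*0 + h).
  assert (Hs : 1 <= s) by (unfold s, Kc; lra).
  assert (E : Gs f1 s (1-y1) - G2 M f1 0 h y1 =
     6*(Mu-M)*f1*s + 4*(Mu*Mu-M*M)*f1*f1 + 16*(Mu*Mu-M*M)*f1*f1/(1+f1)).
  { unfold Gs, G2, s. field. lra. }
  unfold Gs, G2 in E. fold s in E.
  assert (B1 : 0 <= Mu - M) by (unfold Mu; lra).
  assert (B2 : 0 <= Mu*Mu - M*M) by (unfold Mu; nra).
  assert (B3 : 0 <= 6*(Mu-M)*f1*s) by (repeat apply Rmult_le_pos; lra).
  assert (B4 : 0 <= 4*(Mu*Mu-M*M)*f1*f1) by (repeat apply Rmult_le_pos; lra).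
  assert (B5 : 0 <= 16*(Mu*Mu-M*M)*f1*f1/(1+f1)) by (apply div_nonneg; [repeat apply Rmult_le_pos; lra | lra]).
  lra.
Qed.

Lemma part_sq (p c Q y : R) : 0 < p ->
  -Q*(p*(1-y)) + (p*y*(1/2-y) + c*(1-y)) <= p*(Q*Q-3*Q+1/4)/4 + c*(3/2-Q)/2 + c*c/(4*p).
Proof.
  intros Hp.
  assert (E : p*(Q*Q-3*Q+1/4)/4 + c*(3/2-Q)/2 + c*c/(4*p) - (-Q*(p*(1-y)) + (p*y*(1/2-y) + c*(1-y)))
     = (2*p*y - (p*(Q+1/2)-c))^2/(4*p)) by (field; lra).
  assert (0 <= (2*p*y - (p*(Q+1/2)-c))^2/(4*p)) by (apply div_nonneg; [apply pow2_ge_0|lra]).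
  lra.
Qed.

Lemma chain (M f1 f2 y1 y2 y3 : R) : 857864/10000000 <= M <= 857865/10000000 ->
  1/13 <= f1 <= 1/6 -> 0 <= f2 <= 1/2 -> f2 <= 1 - 6*f1 ->
  0 <= y1 <= 1/2 -> 0 <= y2 <= 1/2 -> 0 <= y3 <= 1/2 ->
  let h := y1*(1/2-y1)/(1-y1) in
  let Q := Kc/2 + 4*M*f2/(1-f1) - h in
  -Q*((1-f2)*(1-y2)) + ((1-f2)*y2*(1/2-y2) + 4*M*f1*(1-y2))
  + (-Q*((1+f1+f2)*(1-y3)) + ((1+f1+f2)*y3*(1/2-y3) + 8*M*(f1+f2)*(1-y3)))
  + Kc*(1-f1)*(1-y1)/2 <= 0.
Proof.
  intros HM H1 H2 H3 Hy1 Hy2 Hy3 h Q.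
  pose proof (part_sq (1-f2) (4*M*f1) Q y2 ltac:(lra)) as P2.
  pose proof (part_sq (1+f1+f2) (8*M*(f1+f2)) Q y3 ltac:(lra)) as P3.
  set (c2 := 4*M*f1) in *. set (c3 := 8*M*(f1+f2)) in *.
  set (Q' := Kc/2 + 4*M*f2 - h).
  assert (Hh : 0 <= h) by (apply div_nonneg; nra).
  assert (Hh2 : h <= 1/8).
  { apply div_le. lra. nra. }
  assert (HQQ : 0 <= Q - Q').
  { unfold Q, Q'.
    assert (E : Kc / 2 + 4 * M * f2 / (1 - f1) - h - (Kc / 2 + 4 * M * f2 - h) = 4*M*f2*f1/(1-f1))
      by (field; lra).
    rewrite E. apply div_nonneg; [repeat apply Rmult_le_pos; lra | lra]. }
  assert (HQ : Q <= 1).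
  { unfold Q. assert (4*M*f2/(1-f1) <= 1/2) by (apply div_le; [lra| nra]). unfold Kc; lra. }
  assert (Hmono : (1-f2+(1+f1+f2))*(Q*Q-3*Q+1/4)/4 + (c2+c3)*(3/2-Q)/2
               <= (1-f2+(1+f1+f2))*(Q'*Q'-3*Q'+1/4)/4 + (c2+c3)*(3/2-Q')/2).
  { assert (E : (1-f2+(1+f1+f2))*(Q*Q-3*Q+1/4)/4 + (c2+c3)*(3/2-Q)/2
               - ((1-f2+(1+f1+f2))*(Q'*Q'-3*Q'+1/4)/4 + (c2+c3)*(3/2-Q')/2)
              = (Q-Q')*((2+f1)*(Q+Q'-3)/4 - (c2+c3)/2)) by field.
    assert (0 <= c2+c3) by (unfold c2, c3; nra).
    assert ((2+f1)*(Q+Q'-3)/4 - (c2+c3)/2 <= 0) by nra.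
    nra. }
  pose proof (G2_f2 M f1 f2 h y1 HM H1 H2 H3 Hh) as G2a.
  pose proof (G2_M M f1 y1 HM H1 Hy1) as G2b. fold h in G2b.
  pose proof (Gu_all f1 (1-y1) H1 ltac:(lra)) as G2c.
  assert (E2 : G2 M f1 f2 h y1 = (1-f2+(1+f1+f2))*(Q'*Q'-3*Q'+1/4)/4 + (c2+c3)*(3/2-Q')/2
      + c2*c2/(4*(1-f2)) + c3*c3/(4*(1+f1+f2)) + Kc*(1-f1)*(1-y1)/2).
  { unfold G2, Q', c2, c3. cbv zeta. field. lra. }
  lra.
Qed.

Theorem lemma22 (f1 f2 f3 y1 y2 y3 : R) :
  0 <= f1 <= 1/2 -> 0 <= f2 <= 1/2 -> 0 <= f3 <= 1/2 ->
  0 <= y1 <= 1/2 -> 0 <= y2 <= 1/2 -> 0 <= y3 <= 1/2 ->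
  f1 + f2 + 2 * f3 = 1 ->
  6 * f1 + f2 - 1 < 0 ->
  4 * f1 + f2 - 3/4 < 0 ->
  1/13 <= f1 <= 1/2 ->
  alphahat f1 f2 f3 y1 y2 y3 <= 9163/10000.
Proof.
  intros Hf1 Hf2 Hf3 Hy1 Hy2 Hy3 Hsum H6 H4 H13.
  assert (Hr : 14142135/10000000 <= sqrt 2 <= 14142136/10000000).
  { pose proof (sqrt_sqrt 2 ltac:(lra)) as Hs. pose proof (sqrt_pos 2). nra. }
  assert (HM : 857864/10000000 <= M <= 857865/10000000) by (unfold M; lra).
  assert (Hf1' : 1/13 <= f1 <= 1/6) by lra.
  assert (Hf2' : f2 <= 1 - 6*f1) by lra.
  pose proof (chain M f1 f2 y1 y2 y3 HM Hf1' Hf2 Hf2' Hy1 Hy2 Hy3) as C.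
  cbv zeta in C.
  assert (Hw : 2*(1-f3) = 1+f1+f2) by lra.
  set (a := (1-f1)*(1-y1)).
  set (S := (1-f2)*(1-y2) + 2*(1-f3)*(1-y3)).
  assert (Ha : a <= 1 - f1) by (unfold a; nra).
  assert (HS : 1 + f1/2 <= S) by (unfold S; nra).
  assert (HSa : 0 < S - a) by lra.
  assert (Ha0 : 0 <= a) by (unfold a; nra).
  set (N := S*(y1*(1/2-y1)/(1-y1) - 4*M*f2/(1-f1)) + ((1-f2)*y2*(1/2-y2) + 4*M*f1*(1-y2))
            + (2*(1-f3)*y3*(1/2-y3) + 8*M*(f1+f2)*(1-y3))).
  assert (E : alphahat f1 f2 f3 y1 y2 y3 = N / ((S-a)/2)).
  { unfold alphahat, F1hat, Ahat, P1, P2, P3, N, S, a. cbv zeta.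
    field. unfold S, a in *. repeat split; lra. }
  rewrite E. apply div_le; [lra|].
  assert (E2 : N - 9163/10000*((S-a)/2) =
    -(Kc/2 + 4*M*f2/(1-f1) - y1*(1/2-y1)/(1-y1))*((1-f2)*(1-y2))
    + ((1-f2)*y2*(1/2-y2) + 4*M*f1*(1-y2))
    + (-(Kc/2 + 4*M*f2/(1-f1) - y1*(1/2-y1)/(1-y1))*((1+f1+f2)*(1-y3))
       + ((1+f1+f2)*y3*(1/2-y3) + 8*M*(f1+f2)*(1-y3)))
    + Kc*(1-f1)*(1-y1)/2).
  { unfold N, S, a, Kc. rewrite Hw. field. lra. }
  lra.
Qed.
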